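(* Let $\mathcal{V}$ be a finite set and $\theta\mapsto\boldsymbol{z}_\theta\in\mathbb{R}^{|\mathcal{V}|}$, $\theta\in\mathbb{R}^p$, a differentiable logit map; let $\pi_\theta(a)=\frac{\exp z_\theta(a)}{\sum_{a'}\exp z_\theta(a')}$. Fix behavioral logits $\boldsymbol{z}_{\text{old}}\in\mathbb{R}^{|\mathcal{V}|}$, an advantage vector $\boldsymbol{A}\in\mathbb{R}^{|\mathcal{V}|}$ and $\beta>0$, and set $\boldsymbol{z}^*=\boldsymbol{z}_{\text{old}}+\boldsymbol{A}/\beta$, $\pi^*(a)=\frac{\exp z^*(a)}{\sum_{a'}\exp z^*(a')}$. Define $$\mathcal{L}_{\text{LCO-MSE}}(\theta)=\frac{1}{|\mathcal{V}|}\sum_{a}(z_\theta(a)-z^*(a))^2,\quad \mathcal{L}_{\text{LCO-LCH}}(\theta)=\frac{1}{|\mathcal{V}|}\sum_{a}\log\cosh(z_\theta(a)-z^*(a)),\quad \mathcal{L}_{\text{LCO-KLD}}(\theta)=\sum_{a}\pi^*(a)\log\frac{\pi^*(a)}{\pi_\theta(a)}.$$ At a given $\theta$, let $\sigma_{\max}$ be the largest singular value of the Jacobian $\partial\boldsymbol{z}_\theta/\partial\theta\in\mathbb{R}^{|\mathcal{V}|\times p}$. Then, with Euclidean norms, $$\|\nabla_\theta\mathcal{L}_{\text{LCO-MSE}}\|\le\frac{2}{|\mathcal{V}|}\sigma_{\max}\sqrt{|\mathcal{V}|\,\mathcal{L}_{\text{LCO-MSE}}},\qquad \|\nabla_\theta\mathcal{L}_{\text{LCO-LCH}}\|\le\frac{1}{|\mathcal{V}|}\sigma_{\max}\sqrt{|\mathcal{V}|\bigl(1-\exp(-2\mathcal{L}_{\text{LCO-LCH}})\bigr)},$$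 $$\|\nabla_\theta\mathcal{L}_{\text{LCO-KLD}}\|\le\sigma_{\max}\sqrt{2\,\mathcal{L}_{\text{LCO-KLD}}},$$ where all losses and gradients are evaluated at $\theta$.
   Context: These are the single-time-step Logits Convex Optimization (LCO) objectives, which fit the policy's logits (or distribution) to the optimal target $\boldsymbol{z}^*$ (resp. $\pi^*$) derived from the KL-regularized advantage-maximization objective. *)

(* Defs.v *)
From HB Require Import structures.
From mathcomp Require Import all_boot all_order all_algebra.
From mathcomp Require Import all_classical all_reals all_analysis.
Set Implicit Arguments. Unset Strict Implicit. Unset Printing Implicit Defensive.
Import Order.TTheory GRing.Theory Num.Theory.
Import numFieldNormedType.Exports.
Local Open Scope ring_scope.
Local Open Scope classical_set_scope.

Section LCO.
Context {R : realType}.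

Definition euclid_norm k (v : 'rV[R]_k) : R := Num.sqrt (\sum_(j < k) v 0 j ^+ 2).

Definition grad p (L : 'rV[R]_p -> R) (th : 'rV[R]_p) : 'rV[R]_p :=
  \row_(j < p) ('D_(delta_mx 0 j) L th : R).

(* Largest singular value of a real matrix A: the largest s >= 0 such that
   s^2 is an eigenvalue of A^T A (0 if there is none, e.g. empty matrices). *)
Definition sigma_max m k (A : 'M[R]_(m, k)) : R :=
  sup [set s : R | 0 <= s /\ eigenvalue (A^T *m A) (s ^+ 2)].

Definition softmax n (z : 'rV[R]_n) (a : 'I_n) : R :=
  expR (z 0 a) / \sum_(b < n) expR (z 0 b).

Definition logcosh (x : R) : R := ln ((expR x + expR (- x)) / 2).

Definition zstar n (zold A : 'rV[R]_n) (beta : R) : 'rV[R]_n := zold + beta^-1 *: A.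

Definition L_MSE p n (z : 'rV[R]_p -> 'rV[R]_n) (zs : 'rV[R]_n) (th : 'rV[R]_p) : R :=
  n%:R^-1 * \sum_(a < n) (z th 0 a - zs 0 a) ^+ 2.

Definition L_LCH p n (z : 'rV[R]_p -> 'rV[R]_n) (zs : 'rV[R]_n) (th : 'rV[R]_p) : R :=
  n%:R^-1 * \sum_(a < n) logcosh (z th 0 a - zs 0 a).

Definition L_KLD p n (z : 'rV[R]_p -> 'rV[R]_n) (zs : 'rV[R]_n) (th : 'rV[R]_p) : R :=
  \sum_(a < n) softmax zs a * ln (softmax zs a / softmax (z th) a).

End LCO.

(* Main.v *)
Require Import Defs.
From HB Require Import structures.
From mathcomp Require Import all_boot all_order all_algebra.
From mathcomp Require Import all_classical all_reals all_analysis.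
From mathcomp Require Import ring lra.
Import Order.TTheory GRing.Theory Num.Theory.
Import numFieldNormedType.Exports.
Set Implicit Arguments. Unset Strict Implicit. Unset Printing Implicit Defensive.
Local Open Scope ring_scope.
Section Spec.
Context {R : realType}.

Definition sqn k (x : 'rV[R]_k) : R := \sum_(i < k) x 0 i ^+ 2.
Definition QF k (B : 'M[R]_k) (x : 'rV[R]_k) : R := (x *m B *m x^T) 0 0.

Lemma sqnE k (x : 'rV[R]_k) : sqn x = (x *m x^T) 0 0.
Proof. by rewrite /sqn !mxE; apply: eq_bigr => i _; rewrite !mxE expr2. Qed.

Lemma sqn_ge0 k (x : 'rV[R]_k) : 0 <= sqn x.
Proof. by apply: sumr_ge0 => i _; exact: sqr_ge0. Qed.

Lemma sqn_eq0 k (x : 'rV[R]_k) : sqn x = 0 -> x = 0.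
Proof.
move=> h; apply/rowP => i; rewrite mxE.
have := psumr_eq0P (fun i _ => sqr_ge0 (x 0 i)) h (erefl true) (i := i).
by move/eqP; rewrite sqrf_eq0 => /eqP.
Qed.

Lemma sqnZ k c (x : 'rV[R]_k) : sqn (c *: x) = c ^+ 2 * sqn x.
Proof. by rewrite /sqn mulr_sumr; apply: eq_bigr => i _; rewrite mxE exprMn. Qed.

Lemma euclid_sqn k (x : 'rV[R]_k) : euclid_norm x = Num.sqrt (sqn x).
Proof. by []. Qed.

Lemma sqn_mulT m k (A : 'M[R]_(m, k)) (x : 'rV[R]_k) :
  sqn (x *m A^T) = QF (A^T *m A) x.
Proof. by rewrite sqnE /QF trmx_mul trmxK !mulmxA. Qed.

Lemma mx11_tr (X : 'M[R]_1) : X^T 0 0 = X 0 0.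
Proof. by rewrite mxE. Qed.

Lemma psd_zero k (B : 'M[R]_k) (u : 'rV[R]_k) :
  B^T = B -> (forall x, 0 <= QF B x) -> QF B u = 0 -> u *m B = 0.
Proof.
move=> BT psd Qu; set w := u *m B.
have key t : QF B (u + t *: w) = 2 * t * sqn w + t ^+ 2 * QF B w.
  rewrite /QF linearD /= linearZ /= mulmxDl mulmxDr.
  rewrite !mulmxDl -!scalemxAl -!scalemxAr !scalerA.
  have e0 : (u *m B *m u^T) 0 0 = 0 by exact: Qu.
  have e1 : (u *m B *m w^T) 0 0 = sqn w by rewrite sqnE.
  have e2 : (w *m B *m u^T) 0 0 = sqn w.
    rewrite -mx11_tr !trmx_mul trmxK BT -e1 /w !mulmxA.
    by rewrite trmx_mul BT !mulmxA.
  have hD (X Y : 'M[R]_1) : (X + Y) 0 0 = X 0 0 + Y 0 0 by rewrite mxE.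
  have hZ c (X : 'M[R]_1) : (c *: X) 0 0 = c * X 0 0 by rewrite mxE.
  rewrite !hD !hZ e0 e1 e2 /QF; ring.
have c0 : sqn w = 0.
  apply/eqP; rewrite eq_le sqn_ge0 andbT; rewrite leNgt; apply/negP => cpos.
  set c := sqn w in cpos key *; set d := QF B w in key *.
  have he : 0 < `|d| + 1 by rewrite ltr_pwDr // normr_ge0.
  have hd : d <= `|d| by exact: ler_norm.
  have := psd (u + (- c / (`|d| + 1)) *: w); rewrite key.
  have -> : 2 * (- c / (`|d| + 1)) * c + (- c / (`|d| + 1)) ^+ 2 * d
      = (c / (`|d| + 1)) ^+ 2 * (d - 2 * (`|d| + 1)).
    by field; rewrite gt_eqF.
  rewrite pmulr_rge0; last by rewrite exprn_gt0 // divr_gt0.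
  rewrite subr_ge0 => h.
  have := normr_ge0 d; lra.
exact: sqn_eq0.
Qed.

End Spec.
Section Cont.
Context {R : realType}.

Lemma cont_sum (T : topologicalType) k (h : 'I_k -> T -> R) :
  (forall i, continuous (h i)) -> continuous (fun y => \sum_(i < k) h i y).
Proof.
elim: k h => [|k IH] h H.
  by under eq_fun do rewrite big_ord0; exact: cst_continuous.
under eq_fun do rewrite big_ord_recr /=.
move=> x.
have := continuousD (IH (fun i => h (widen_ord (leqnSn k) i)) (fun i => H _) x) (H ord_max x).
by [].
Qed.

Lemma cont_sq (T : topologicalType) (f : T -> R) : continuous f ->
  continuous (fun y => f y ^+ 2).
Proof.
move=> cf x; under eq_fun do rewrite expr2.
exact: (continuousM (cf x) (cf x)).
Qed.

Lemma cont_coord k (i : 'I_k) : continuous (fun x : 'rV[R]_k => x 0 i).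
Proof. exact: coord_continuous. Qed.

Lemma cont_mulmx k m (C : 'M[R]_(k, m)) j :
  continuous (fun x : 'rV[R]_k => (x *m C) 0 j).
Proof.
under eq_fun do rewrite mxE.
apply: cont_sum => i x.
apply: continuousM; [exact: cont_coord | exact: cst_continuous].
Qed.

Lemma cont_sqn k : continuous (@sqn R k).
Proof. by apply: cont_sum => i; apply: cont_sq; exact: cont_coord. Qed.

Lemma cont_sqnmul k m (C : 'M[R]_(k, m)) : continuous (fun x : 'rV[R]_k => sqn (x *m C)).
Proof. by apply: cont_sum => i; apply: cont_sq; exact: cont_mulmx. Qed.

End Cont.
Section Max.
Context {R : realType}.
Local Open Scope classical_set_scope.

Lemma sqn_coord_le k (x : 'rV[R]_k) i : x 0 i ^+ 2 <= sqn x.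
Proof.
rewrite /sqn (bigD1 i) //= lerDl; apply: sumr_ge0 => j _; exact: sqr_ge0.
Qed.

Lemma sphere_max k m (C : 'M[R]_(k, m)) : (0 < k)%N ->
  exists2 u : 'rV[R]_k, sqn u = 1 &
    forall x, sqn x = 1 -> sqn (x *m C) <= sqn (u *m C).
Proof.
move=> k0.
pose S := [set x : 'rV[R]_k | sqn x = 1].
have S0 : S !=set0.
  exists (delta_mx 0 (Ordinal k0)); rewrite /S /= /sqn (bigD1 (Ordinal k0)) //=.
  rewrite big1 => [|j jn]; first by rewrite !mxE !eqxx /= expr1n addr0.
  by rewrite !mxE eqxx /= (negbTE jn) /= expr0n.
have cS : compact S.
  apply: (subclosed_compact _ (@rV_compact _ _ (fun _ => `[(-1 : R), 1]) _)).
  - apply: (@preimage_closed _ _ (@sqn R k) [set y | y = 1]); last exact: closed_eq.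
    move=> x _; exact: cont_sqn.
  - by move=> i; exact: segment_compact.
  - move=> x /= Sx i; rewrite /= in_itv /=.
    have := sqn_coord_le x i; rewrite Sx => h.
    apply/andP; split; nra.
have cf : {within S, continuous (fun x => sqn (x *m C))}.
  exact/continuous_subspaceT/cont_sqnmul.
have [u uS umax] := compact_EVT_max S0 cS cf.
exists u; first by move: uS; rewrite inE.
by move=> x Sx; apply: umax; rewrite inE.
Qed.

End Max.
Section Sigma.
Context {R : realType}.
Local Open Scope classical_set_scope.

Lemma euclid0 k : euclid_norm (0 : 'rV[R]_k) = 0.
Proof.
rewrite /euclid_norm big1 ?sqrtr0 // => i _; by rewrite mxE expr0n.
Qed.

Lemma euclid_ge0 k (x : 'rV[R]_k) : 0 <= euclid_norm x.
Proof. exact: sqrtr_ge0. Qed.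

Lemma sigma_bound m k (A : 'M[R]_(m, k)) (g : 'rV[R]_k) :
  euclid_norm (g *m A^T) <= sigma_max A * euclid_norm g.
Proof.
case: (posnP k) => [k0|k0].
  have -> : g = 0 by apply/rowP => i; exfalso; have := ltn_ord i; rewrite {2}k0.
  by rewrite mul0mx (euclid0 m) (euclid0 k) mulr0.
have [u u1 umax] := sphere_max A^T k0.
set lam := sqn (u *m A^T).
have lam0 : 0 <= lam by exact: sqn_ge0.
have hb x : sqn (x *m A^T) <= lam * sqn x.
  have [x0|xn0] := eqVneq (sqn x) 0.
    by rewrite x0 mulr0 (sqn_eq0 x0) mul0mx /sqn big1 // => i _; rewrite mxE expr0n.
  have xp : 0 < sqn x by rewrite lt_def xn0 sqn_ge0.
  set c := (Num.sqrt (sqn x))^-1.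
  have c2 : c ^+ 2 = (sqn x)^-1 by rewrite /c exprVn sqr_sqrtr // ltW.
  have := umax (c *: x); rewrite sqnZ c2 mulVf // => /(_ erefl).
  rewrite -scalemxAl sqnZ c2 -(ler_pM2l xp) mulrA mulfV // mul1r.
  by rewrite mulrC.
set M := A^T *m A.
have QM x : QF M x = sqn (x *m A^T) by rewrite sqn_mulT.
have eig : u *m M = lam *: u.
  set B := lam%:M - M.
  have BT : B^T = B by rewrite /B linearB /= tr_scalar_mx /M trmx_mul trmxK.
  have QB x : QF B x = lam * sqn x - QF M x.
    rewrite /QF /B mulmxBr mul_mx_scalar mulmxBl -scalemxAl.
    have hB (X Y : 'M[R]_1) : (X - Y) 0 0 = X 0 0 - Y 0 0 by rewrite !mxE.
    have hZ c (X : 'M[R]_1) : (c *: X) 0 0 = c * X 0 0 by rewrite mxE.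
    by rewrite hB hZ sqnE.
  have uB0 : u *m B = 0.
    apply: (psd_zero BT).
      by move=> x; rewrite QB QM subr_ge0.
    by rewrite QB QM u1 mulr1 subrr.
  move: uB0; rewrite /B mulmxBr mul_mx_scalar => /eqP.
  by rewrite subr_eq0 => /eqP ->.
have sq0 : sqn (0 : 'rV[R]_k) = 0 by rewrite /sqn big1 // => i _; rewrite mxE expr0n.
have un0 : u != 0.
  by apply/eqP => u0; move: u1; rewrite u0 sq0 => /eqP; rewrite eq_sym oner_eq0.
set S := [set s : R | 0 <= s /\ eigenvalue (A^T *m A) (s ^+ 2)].
have Ssl : S (Num.sqrt lam).
  split; first exact: sqrtr_ge0.
  rewrite sqr_sqrtr //; apply/eigenvalueP; exists u; [exact: eig | exact: un0].
have hs : has_sup S.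
  split; first by exists (Num.sqrt lam).
  exists (Num.sqrt lam) => s [s0 /eigenvalueP [v vM vn0]].
  have vp : 0 < sqn v.
    by rewrite lt_def sqn_ge0 andbT; apply/eqP => /sqn_eq0 /eqP; apply/negP.
  have : s ^+ 2 * sqn v <= lam * sqn v.
    apply: le_trans (hb v); rewrite -QM.
    have hZ c (X : 'M[R]_1) : (c *: X) 0 0 = c * X 0 0 by rewrite mxE.
    by rewrite /QF -/M vM -scalemxAl hZ sqnE.
  rewrite ler_pM2r // => h.
  by rewrite -(ger0_norm s0) -sqrtr_sqr ler_sqrt.
have sig : Num.sqrt lam <= sigma_max A by exact: sup_upper_bound.
rewrite /euclid_norm -!/(sqn _).
apply: (@le_trans _ _ (Num.sqrt lam * Num.sqrt (sqn g))).
  by rewrite -sqrtrM // ler_sqrt ?mulr_ge0 ?sqn_ge0 ?hb.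
by rewrite ler_wpM2r // sqrtr_ge0.
Qed.

End Sigma.
Section Deriv.
Context {R : realType} {V : normedModType R}.

Lemma line_derive (f : V -> R) x v :
  'D_v f x = 'D_1 (fun h : R => f (h *: v + x)) 0.
Proof.
rewrite /derive /=.
have -> : (fun h : R => h^-1 *: (f ((h *: (1:R) + 0) *: v + x) - f (0 *: v + x)))
   = (fun h : R => h^-1 *: (f (h *: v + x) - f x)).
  by apply: funext => h /=; rewrite scale0r add0r addr0 [_%:A]mulr1.
by [].
Qed.

Lemma is_derive_compR (f : V -> R) (g : R -> R) x v df dg :
  is_derive x v f df -> is_derive (f x) 1 g dg ->
  is_derive x v (fun y => g (f y)) (dg * df).
Proof.
move=> Hf Hg.
have [Hfd Hfv] := Hf; have [Hgd Hgv] := Hg.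
have Fd : derivable (fun h : R => f (h *: v + x)) 0 1.
  by move/derivable1P: Hfd.
have F0 : (fun h : R => f (h *: v + x)) 0 = f x by rewrite /= scale0r add0r.
have Gd : derivable g (f x) 1 := Hgd.
have Fdiff : differentiable (fun h : R => f (h *: v + x)) 0.
  exact/derivable1_diffP.
have Gdiff : differentiable g ((fun h : R => f (h *: v + x)) 0).
  rewrite F0; exact/derivable1_diffP.
have Cdiff := differentiable_comp Fdiff Gdiff.
have Cd : derivable (g \o (fun h : R => f (h *: v + x))) 0 1.
  exact/derivable1_diffP.
apply: DeriveDef.
  apply/derivable1P; exact Cd.
rewrite line_derive.
have Gd2 : derivable g ((fun h : R => f (h *: v + x)) 0) 1 by rewrite F0.
have E := derive1_comp Fd Gd2.
rewrite !derive1E in E.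
change ('D_1 (g \o (fun h : R => f (h *: v + x))) 0 = dg * df).
rewrite E F0 Hgv -line_derive Hfv.
by [].
Qed.

Lemma is_derive_sumF k (h : 'I_k -> V -> R) x v (dh : 'I_k -> R) :
  (forall i, is_derive x v (h i) (dh i)) ->
  is_derive x v (fun y => \sum_(i < k) h i y) (\sum_(i < k) dh i).
Proof.
move=> H.
have := @is_derive_sum _ _ _ k h x v dh H.
by rewrite (_ : \sum_(i < k) h i = (fun y => \sum_(i < k) h i y)) // ; apply: funext => y; rewrite fct_sumE.
Qed.

Lemma is_derive_cstF x v (c : R) : is_derive x v (fun _ : V => c) 0.
Proof. exact: is_derive_cst. Qed.


Lemma is_derive_affF (f : V -> R) x v df a b : is_derive x v f df ->
  is_derive x v (fun y => a * f y + b) (a * df).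
Proof.
move=> Hf.
have H := is_deriveD (is_deriveZ a Hf) (is_derive_cst b x v).
have E : (a *: f + cst b) = (fun y => a * f y + b) by apply: funext.
rewrite E in H; apply: is_derive_eq H _.
by rewrite addr0.
Qed.

Lemma is_derive_oppF (f : V -> R) x v df : is_derive x v f df ->
  is_derive x v (fun y => - f y) (- df).
Proof.
move=> Hf; have H := is_deriveN Hf.
have E : (- f) = (fun y => - f y) by apply: funext.
by rewrite E in H.
Qed.

Lemma is_derive_addF (f g : V -> R) x v df dg : is_derive x v f df ->
  is_derive x v g dg -> is_derive x v (fun y => f y + g y) (df + dg).
Proof.
move=> Hf Hg; have H := is_deriveD Hf Hg.
have E : (f + g) = (fun y => f y + g y) by apply: funext.
by rewrite E in H.
Qed.

Lemma is_derive_mulF (f g : V -> R) x v df dg : is_derive x v f df ->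
  is_derive x v g dg -> is_derive x v (fun y => f y * g y) (f x * dg + g x * df).
Proof.
move=> Hf Hg; have H := is_deriveM Hf Hg.
have E : (f * g) = (fun y => f y * g y) by apply: funext.
by rewrite E in H.
Qed.

Lemma is_derive_sqF (f : V -> R) x v df : is_derive x v f df ->
  is_derive x v (fun y => f y ^+ 2) (2 * f x * df).
Proof.
move=> Hf; have H := is_deriveX 2 Hf.
have E : (f ^+ 2) = (fun y => f y ^+ 2) by apply: funext => y; rewrite !fctE.
rewrite E in H; apply: is_derive_eq H _.
by rewrite expr1.
Qed.

Lemma is_derive_expF (f : V -> R) x v df : is_derive x v f df ->
  is_derive x v (fun y => expR (f y)) (expR (f x) * df).
Proof. by move=> Hf; apply: is_derive_compR => //; exact: is_derive_expR. Qed.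

Lemma is_derive_lnF (f : V -> R) x v df : 0 < f x -> is_derive x v f df ->
  is_derive x v (fun y => ln (f y)) ((f x)^-1 * df).
Proof. by move=> fx0 Hf; apply: is_derive_compR => //; exact: is_derive1_ln. Qed.

End Deriv.

Section DerivRow.
Context {R : realType} {p : nat}.

Lemma is_derive_coord n (z : 'rV[R]_p -> 'rV[R]_n) x v a :
  differentiable z x -> is_derive x v (fun y => z y 0 a) ((v *m 'J z x) 0 a).
Proof.
move=> dz.
have dzv : derivable z x v by exact: diff_derivable.
apply: DeriveDef.
  by move/derivable_mxP : dzv; apply.
by rewrite -deriveEjacobian // derive_mx // mxE.
Qed.


Lemma grad_eq n (z : 'rV[R]_p -> 'rV[R]_n) (L : 'rV[R]_p -> R) th (g : 'rV[R]_n) :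
  (forall v, is_derive th v L (\sum_(a < n) g 0 a * (v *m 'J z th) 0 a)) ->
  grad L th = g *m ('J z th)^T.
Proof.
move=> H; apply/rowP => j; rewrite !mxE.
have [_ ->] := H (delta_mx 0 j).
apply: eq_bigr => a _; rewrite -rowE !mxE.
by [].
Qed.

End DerivRow.
Section Scalar.
Context {R : realType}.

Lemma is_derive_ext {V : normedModType R} (f g : V -> R) x v df :
  is_derive x v f df -> (forall y, f y = g y) -> is_derive x v g df.
Proof. by move=> H e; have <- : f = g by apply: funext. Qed.

Lemma ln_le_sub1 (y : R) : 0 < y -> ln y <= y - 1.
Proof.
move=> y0; have := @le_ln1Dx R (y - 1).
have -> : 1 + (y - 1) = y by ring.
apply; lra.
Qed.

Lemma ln_ge_1subinv (y : R) : 0 < y -> 1 - y^-1 <= ln y.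
Proof.
move=> y0; have := @ln_le_sub1 y^-1; rewrite invr_gt0 => /(_ y0).
rewrite lnV ?posrE //; lra.
Qed.

Definition Gp (b t : R) := t * ln (t / b) - t + b - (t - b) ^+ 2 / 2.

Lemma Gp_derive (b t : R) : 0 < b -> 0 < t ->
  is_derive t 1 (Gp b) (ln (t / b) - (t - b)).
Proof.
move=> b0 t0.
have Hid : is_derive t (1:R) (fun y : R => y) 1 by exact: is_derive_id.
have Hdiv : is_derive t (1:R) (fun y : R => y / b) (b^-1 * 1).
  apply: (is_derive_ext (is_derive_affF b^-1 0 Hid)) => y.
  by rewrite addr0 mulrC.
have Hln := @is_derive_lnF _ _ (fun y : R => y / b) t 1 _ (divr_gt0 t0 b0) Hdiv.
have HP := is_derive_mulF Hid Hln.
have Hsub : is_derive t (1:R) (fun y : R => y - b) (1 * 1).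
  by apply: (is_derive_ext (is_derive_affF 1 (- b) Hid)) => y; rewrite mul1r.
have HQ := is_derive_sqF Hsub.
have HQ2 := is_derive_affF (- 2^-1) 0 HQ.
have Hl := is_derive_affF (-1) b Hid.
have H := is_derive_addF (is_derive_addF HP HQ2) Hl.
have H2 : is_derive t 1 (Gp b) (t * ((t / b)^-1 * (b^-1 * 1)) + ln (t / b) * 1 +
   - 2^-1 * (2 * (t - b) * (1 * 1)) + -1 * 1).
  apply: (is_derive_ext H) => y.
  rewrite /Gp; lra.
apply: is_derive_eq H2 _; field.
by rewrite gt_eqF //= gt_eqF.
Qed.


Lemma Gp_cont (b x y : R) : 0 < b -> 0 < x ->
  {within `[x, y], continuous (Gp b)}%classic.
Proof.
move=> b0 x0; apply: derivable_within_continuous => z.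
rewrite in_itv /= => /andP [xz _].
by have [] := Gp_derive b0 (lt_le_trans x0 xz).
Qed.

Lemma pinsker_term (a b : R) : 0 < a -> a <= 1 -> 0 < b -> b <= 1 ->
  (a - b) ^+ 2 / 2 <= a * ln (a / b) - a + b.
Proof.
move=> a0 a1 b0 b1.
suff : 0 <= Gp b a by rewrite /Gp; lra.
have Gb : Gp b b = 0 by rewrite /Gp divff ?gt_eqF // ln1 mulr0 subrr expr0n /=; lra.
have dG (x y : R) : 0 < x -> forall w : R, w \in `]x, y[ ->
    is_derive w 1 (Gp b) ((fun u => ln (u / b) - (u - b)) w).
  move=> x0 w; rewrite in_itv /= => /andP [xw _]; apply: Gp_derive => //.
  exact: lt_trans x0 xw.
case: (ltgtP a b) => [ab|ba|->]; last by rewrite Gb.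
- have [c] := MVT ab (dG a b a0) (Gp_cont (y:=b) b0 a0).
  rewrite in_itv /= => /andP [ac cb]; rewrite Gb => e.
  have c0 : 0 < c by exact: lt_trans a0 ac.
  have h1 := ln_le_sub1 (divr_gt0 c0 b0).
  have h2 : c / b - 1 - (c - b) = (c - b) * (b^-1 - 1) by field; rewrite gt_eqF.
  have h3 : 1 <= b^-1 by rewrite invr_ge1 // unitfE gt_eqF.
  have h4 : (c - b) * (b^-1 - 1) <= 0 by rewrite nmulr_rle0 ?subr_lt0 // subr_ge0.
  have h5 : ln (c / b) - (c - b) <= 0 by lra.
  have : 0 <= - (ln (c / b) - (c - b)) * (b - a) by rewrite mulr_ge0 // ?oppr_ge0 // subr_ge0 ltW.
  lra.
- have [c] := MVT ba (dG b a b0) (Gp_cont (y:=a) b0 b0).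
  rewrite in_itv /= => /andP [bc ca]; rewrite Gb => e.
  have c0 : 0 < c by exact: lt_trans b0 bc.
  have h1 := ln_ge_1subinv (divr_gt0 c0 b0).
  have h2 : 1 - (c / b)^-1 - (c - b) = (c - b) * (c^-1 - 1).
    by field; rewrite (gt_eqF c0) (gt_eqF b0).
  have h3 : 1 <= c^-1 by rewrite invr_ge1 ?unitfE ?gt_eqF //; exact: ltW (lt_le_trans ca a1).
  have h4 : 0 <= (c - b) * (c^-1 - 1) by apply: mulr_ge0; lra.
  have h5 : 0 <= ln (c / b) - (c - b) by lra.
  have : 0 <= (ln (c / b) - (c - b)) * (a - b) by apply: mulr_ge0; lra.
  lra.
Qed.


Lemma jensen_exp n (y : 'I_n -> R) :
  n%:R * expR (n%:R^-1 * \sum_(i < n) y i) <= \sum_(i < n) expR (y i).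
Proof.
case: n y => [|n] y; first by rewrite mul0r big_ord0.
set m := n.+1%:R^-1 * \sum_(i < n.+1) y i.
have h i : expR m * (1 + (y i - m)) <= expR (y i).
  have -> : expR (y i) = expR m * expR (y i - m) by rewrite -expRD; congr expR; ring.
  by rewrite ler_wpM2l ?expR_ge0 // expR_ge1Dx.
apply: le_trans (ler_sum _ (fun i _ => h i)).
rewrite -mulr_sumr !big_split /= sumr_const sumrN sumr_const card_ord.
have nn : n.+1%:R != 0 :> R by rewrite pnatr_eq0.
have -> : m *+ n.+1 = \sum_(i < n.+1) y i by rewrite -mulr_natl /m mulrA mulfV // mul1r.
by rewrite subrr addr0 mulrC.
Qed.

Definition tnh (t : R) := (expR t - expR (- t)) / (expR t + expR (- t)).

Lemma tnh_sq t : tnh t ^+ 2 = 1 - expR (- (2 * logcosh t)).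
Proof.
have e0 : 0 < expR t + expR (- t) by rewrite addr_gt0 ?expR_gt0.
have c0 : 0 < (expR t + expR (- t)) / 2 by rewrite divr_gt0.
rewrite /logcosh expRN expRM_natl lnK ?posrE //.
rewrite /tnh; move: e0 c0; rewrite !(expRN t) => e0 c0.
have ep := expR_gt0 t.
field; rewrite gt_eqF //=; apply/negP => /eqP h.
Qed.

End Scalar.
Lemma is_derive_lnF' {R : realType} {V : normedModType R} (f : V -> R) x v df :
  is_derive x v f df -> 0 < f x -> is_derive x v (fun y => ln (f y)) ((f x)^-1 * df).
Proof. by move=> H p0; exact: is_derive_lnF. Qed.

Section Softmax.
Context {R : realType} {n : nat}.

Lemma sumexp_gt0 (w : 'rV[R]_n) : (0 < n)%N -> 0 < \sum_(b < n) expR (w 0 b).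
Proof.
move=> n0; rewrite (bigD1 (Ordinal n0)) //= ltr_pwDl ?expR_gt0 //.
by apply: sumr_ge0 => i _; exact: expR_ge0.
Qed.

Lemma softmax_gt0 (w : 'rV[R]_n) a : 0 < softmax w a.
Proof.
by rewrite /softmax divr_gt0 ?expR_gt0 // sumexp_gt0 //; case: a => a /=; case: n w => //.
Qed.

Lemma softmax_sum (w : 'rV[R]_n) : (0 < n)%N -> \sum_(a < n) softmax w a = 1.
Proof.
move=> n0; rewrite /softmax -mulr_suml mulfV // gt_eqF //; exact: sumexp_gt0.
Qed.

Lemma softmax_le1 (w : 'rV[R]_n) a : softmax w a <= 1.
Proof.
have n0 : (0 < n)%N by case: a => a /=; case: n w => //.
rewrite -(softmax_sum w n0) (bigD1 a) //= lerDl.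
by apply: sumr_ge0 => i _; exact: ltW (softmax_gt0 w i).
Qed.

End Softmax.

Section Losses.
Context {R : realType} {p n : nat} (z : 'rV[R]_p -> 'rV[R]_n) (zs : 'rV[R]_n).

Lemma is_derive_d th v a : differentiable z th ->
  is_derive th v (fun y => z y 0 a - zs 0 a) ((v *m 'J z th) 0 a).
Proof.
move=> dz; have H := is_derive_affF 1 (- zs 0 a) (is_derive_coord v a dz).
apply: is_derive_eq (is_derive_ext H _) _ => [y|]; by rewrite mul1r.
Qed.

Definition gM th : 'rV[R]_n := \row_a (n%:R^-1 * (2 * (z th 0 a - zs 0 a))).

Lemma mse_derive th v : differentiable z th ->
  is_derive th v (L_MSE z zs) (\sum_(a < n) gM th 0 a * (v *m 'J z th) 0 a).
Proof.
move=> dz.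
have Hs a := is_derive_sqF (is_derive_d v a dz).
have HS := @is_derive_sumF _ _ n (fun a y => (z y 0 a - zs 0 a) ^+ 2) th v _ Hs.
have HL := is_derive_affF n%:R^-1 0 HS.
have H := is_derive_ext HL (g := L_MSE z zs) (fun y => addr0 _).
apply: is_derive_eq H _.
rewrite mulr_sumr; apply: eq_bigr => a _; rewrite [gM th 0 a]mxE; ring.
Qed.


Definition gL th : 'rV[R]_n := \row_a (n%:R^-1 * tnh (z th 0 a - zs 0 a)).

Lemma logcosh_derive th v a : differentiable z th ->
  is_derive th v (fun y => logcosh (z y 0 a - zs 0 a))
    (tnh (z th 0 a - zs 0 a) * (v *m 'J z th) 0 a).
Proof.
move=> dz; have Hd := is_derive_d v a dz.
have He1 := is_derive_expF Hd.
have He2 := is_derive_expF (is_derive_oppF Hd).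
have Hh := is_derive_affF 2^-1 0 (is_derive_addF He1 He2).
set d := z th 0 a - zs 0 a.
have pos : 0 < 2^-1 * (expR d + expR (- d)) + 0.
  by rewrite addr0 mulr_gt0 // ?invr_gt0 // addr_gt0 ?expR_gt0.
have Hl := is_derive_lnF' Hh pos.
have H : is_derive th v (fun y => logcosh (z y 0 a - zs 0 a))
    ((2^-1 * (expR d + expR (- d)) + 0)^-1 *
     (2^-1 * (expR d * (v *m 'J z th) 0 a + expR (- d) * - (v *m 'J z th) 0 a))).
  by apply: (is_derive_ext Hl) => y; rewrite /logcosh addr0 mulrC.
apply: is_derive_eq H _.
rewrite /tnh -/d addr0.
have e0 : expR d + expR (- d) != 0 by rewrite gt_eqF // addr_gt0 ?expR_gt0.
by field.
Qed.

Lemma lch_derive th v : differentiable z th ->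
  is_derive th v (L_LCH z zs) (\sum_(a < n) gL th 0 a * (v *m 'J z th) 0 a).
Proof.
move=> dz.
have Hs a := logcosh_derive v a dz.
have HS := @is_derive_sumF _ _ n (fun a y => logcosh (z y 0 a - zs 0 a)) th v _ Hs.
have HL := is_derive_affF n%:R^-1 0 HS.
have H := is_derive_ext HL (g := L_LCH z zs) (fun y => addr0 _).
apply: is_derive_eq H _.
rewrite mulr_sumr; apply: eq_bigr => a _; rewrite [gL th 0 a]mxE; ring.
Qed.

Definition KC := \sum_(a < n) softmax zs a * ln (softmax zs a).

Lemma kld_rewrite y : (0 < n)%N ->
  L_KLD z zs y = KC - \sum_(a < n) softmax zs a * z y 0 a
                 + ln (\sum_(b < n) expR (z y 0 b)).
Proof.
move=> n0; have S0 := sumexp_gt0 (z y) n0.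
rewrite /L_KLD.
transitivity (\sum_(a < n) (softmax zs a * ln (softmax zs a) - softmax zs a * z y 0 a
      + softmax zs a * ln (\sum_(b < n) expR (z y 0 b)))).
  apply: eq_bigr => a _.
  have E : ln (softmax (z y) a) = z y 0 a - ln (\sum_(b < n) expR (z y 0 b)).
    by rewrite /softmax ln_div ?posrE ?expR_gt0 // expRK.
  rewrite ln_div ?posrE ?softmax_gt0 // E; ring.
by rewrite !big_split /= sumrN -mulr_suml softmax_sum // mul1r.
Qed.

Definition gK th : 'rV[R]_n := \row_a (softmax (z th) a - softmax zs a).

Lemma kld_derive th v : (0 < n)%N -> differentiable z th ->
  is_derive th v (L_KLD z zs) (\sum_(a < n) gK th 0 a * (v *m 'J z th) 0 a).
Proof.
move=> n0 dz.
have Hc a := is_derive_coord v a dz.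
have HP a := is_derive_affF (softmax zs a) 0 (Hc a).
have HPS := @is_derive_sumF _ _ n (fun a y => softmax zs a * z y 0 a + 0) th v _ HP.
have HE b := is_derive_expF (Hc b).
have HES := @is_derive_sumF _ _ n (fun b y => expR (z y 0 b)) th v _ HE.
have HlnS := is_derive_lnF' HES (sumexp_gt0 (z th) n0).
have H := is_derive_addF (is_derive_addF (is_derive_cstF th v KC) (is_derive_oppF HPS)) HlnS.
set S := \sum_(b < n) expR (z th 0 b).
have H2 : is_derive th v (L_KLD z zs)
   (0 + - (\sum_(a < n) softmax zs a * (v *m 'J z th) 0 a)
    + S^-1 * \sum_(b < n) (expR (z th 0 b) * (v *m 'J z th) 0 b)).
  apply: (is_derive_ext H) => y; rewrite (kld_rewrite y n0).
  congr (_ + _); congr (_ - _); apply: eq_bigr => a _; exact: addr0.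
apply: is_derive_eq H2 _.
rewrite add0r mulr_sumr -sumrN -big_split /=; apply: eq_bigr => a _.
rewrite [gK th 0 a]mxE /softmax -/S; ring.
Qed.

End Losses.
Section Bounds.
Context {R : realType}.

Lemma sigma_ge0 m k (A : 'M[R]_(m, k)) : 0 <= sigma_max A.
Proof.
rewrite /sigma_max.
case: (pselect (has_sup [set s : R | 0 <= s /\ eigenvalue (A^T *m A) (s ^+ 2)])) => [hs|nhs].
  have [[e [e0 Se]] _] := hs.
  exact: le_trans e0 (sup_upper_bound hs (conj e0 Se)).
by rewrite sup_out.
Qed.

Context {p n : nat} (z : 'rV[R]_p -> 'rV[R]_n) (zs : 'rV[R]_n).

Lemma euclid_n0 (g : 'rV[R]_n) : n = 0%N -> euclid_norm g = 0.
Proof.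
move=> n0; rewrite /euclid_norm big1 ?sqrtr0 // => i _.
by exfalso; have := ltn_ord i; rewrite {2}n0.
Qed.

Lemma gM_bound th :
  euclid_norm (gM z zs th) <= 2 / n%:R * Num.sqrt (n%:R * L_MSE z zs th).
Proof.
case: (posnP n) => [n0|n0].
  by rewrite euclid_n0 // n0 invr0 mulr0 mul0r.
have nn : n%:R != 0 :> R by rewrite pnatr_eq0 -lt0n.
have E : sqn (gM z zs th) = (2 / n%:R) ^+ 2 * (n%:R * L_MSE z zs th).
  rewrite /L_MSE [n%:R * _]mulrA mulfV // mul1r /sqn mulr_sumr; apply: eq_bigr => a _.
  by rewrite mxE; field.
have -> : euclid_norm (gM z zs th) = Num.sqrt (sqn (gM z zs th)) by [].
by rewrite E sqrtrM ?sqr_ge0 // sqrtr_sqr ger0_norm // divr_ge0 // ler0n.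
Qed.

Lemma gL_bound th :
  euclid_norm (gL z zs th) <=
    n%:R^-1 * Num.sqrt (n%:R * (1 - expR (- (2 * L_LCH z zs th)))).
Proof.
case: (posnP n) => [n0|n0].
  by rewrite euclid_n0 // n0 invr0 mul0r.
have nn : n%:R != 0 :> R by rewrite pnatr_eq0 -lt0n.
set y := fun a : 'I_n => - (2 * logcosh (z th 0 a - zs 0 a)).
have J := jensen_exp y.
have my : n%:R^-1 * \sum_(a < n) y a = - (2 * L_LCH z zs th).
  rewrite /y /L_LCH sumrN -mulr_sumr; ring.
rewrite my in J.
have E : sqn (gL z zs th) = n%:R^-1 ^+ 2 * (n%:R - \sum_(a < n) expR (y a)).
  have -> : n%:R - \sum_(a < n) expR (y a) = \sum_(a < n) (1 - expR (y a)).
    by rewrite sumrB sumr_const card_ord.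
  rewrite /sqn mulr_sumr.
  apply: eq_bigr => a _; rewrite mxE exprMn tnh_sq /y; ring.
have E2 : sqn (gL z zs th) <= n%:R^-1 ^+ 2 * (n%:R * (1 - expR (- (2 * L_LCH z zs th)))).
  rewrite E ler_wpM2l ?sqr_ge0 //; lra.
have -> : euclid_norm (gL z zs th) = Num.sqrt (sqn (gL z zs th)) by [].
apply: le_trans (ler_wsqrtr E2) _.
by rewrite sqrtrM ?sqr_ge0 // sqrtr_sqr ger0_norm // invr_ge0 ler0n.
Qed.

Lemma gK_bound th : (0 < n)%N ->
  euclid_norm (gK z zs th) <= Num.sqrt (2 * L_KLD z zs th).
Proof.
move=> n0.
have -> : euclid_norm (gK z zs th) = Num.sqrt (sqn (gK z zs th)) by [].
apply: ler_wsqrtr.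
have h a : (softmax (z th) a - softmax zs a) ^+ 2 <=
    2 * (softmax zs a * ln (softmax zs a / softmax (z th) a) - softmax zs a + softmax (z th) a).
  have := pinsker_term (softmax_gt0 zs a) (softmax_le1 zs a)
             (softmax_gt0 (z th) a) (softmax_le1 (z th) a).
  have -> : (softmax (z th) a - softmax zs a) ^+ 2 = (softmax zs a - softmax (z th) a) ^+ 2 by ring.
  lra.
have := ler_sum (index_enum _) (fun a _ => h a).
move=> /(_ xpredT) H; rewrite -mulr_sumr !big_split /= sumrN !softmax_sum // in H.
rewrite /sqn /L_KLD; under eq_bigr do rewrite mxE.
by rewrite subrK in H.
Qed.

End Bounds.

Unset Implicit Arguments.

Theorem proposition4p7 (R : realType) (n p : nat)
  (z : 'rV[R]_p -> 'rV[R]_n) (zold A : 'rV[R]_n) (beta : R) (th : 'rV[R]_p) :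
  (forall t : 'rV[R]_p, differentiable z t) ->
  0 < beta ->
  let zs := zstar zold A beta in
  let s := sigma_max ('J z th) in
  [/\ euclid_norm (grad (L_MSE z zs) th)
        <= 2 / n%:R * s * Num.sqrt (n%:R * L_MSE z zs th),
      euclid_norm (grad (L_LCH z zs) th)
        <= n%:R^-1 * s * Num.sqrt (n%:R * (1 - expR (- (2 * L_LCH z zs th))))
    & euclid_norm (grad (L_KLD z zs) th)
        <= s * Num.sqrt (2 * L_KLD z zs th)].
Proof.
move=> dz _ zs s.
have sg0 : 0 <= s by exact: sigma_ge0.
split.
- rewrite (grad_eq (fun v => mse_derive zs v (dz th))).
  apply: le_trans (sigma_bound _ _) _; rewrite -/s.
  rewrite [2 / _ * s]mulrC -mulrA; apply: ler_wpM2l => //.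
  exact: gM_bound.
- rewrite (grad_eq (fun v => lch_derive zs v (dz th))).
  apply: le_trans (sigma_bound _ _) _; rewrite -/s.
  rewrite [_^-1 * s]mulrC -mulrA; apply: ler_wpM2l => //.
  exact: gL_bound.
- case: (posnP n) => [n0|n0].
    have H v : is_derive th v (L_KLD z zs)
        (\sum_(a < n) (0 : 'rV[R]_n) 0 a * (v *m 'J z th) 0 a).
      have E : \sum_(a < n) (0 : 'rV[R]_n) 0 a * (v *m 'J z th) 0 a = 0.
        by apply: big1 => a _; rewrite mxE mul0r.
      rewrite E; apply: (is_derive_ext (is_derive_cstF th v 0)) => y.
      by rewrite /L_KLD big1 // => i _; exfalso; have := ltn_ord i; rewrite {2}n0.
    rewrite (grad_eq H) mul0mx.
    have -> : euclid_norm (0 : 'rV[R]_p) = 0 by exact: euclid0.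
    by rewrite mulr_ge0 // sqrtr_ge0.
  rewrite (grad_eq (fun v => kld_derive zs v n0 (dz th))).
  apply: le_trans (sigma_bound _ _) _; rewrite -/s.
  apply: ler_wpM2l => //.
  exact: gK_bound.
Qed.
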